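(* Let $\Omega$ be a holomorphic one-form on an open ball $U\subset\mathbb{C}^{2m}$ centered at $0$ containing the closed unit ball $B^{4m}[0,1]$, such that $\Omega\cdot\vec R=0$ where $\vec R=\sum_{j=1}^{2m}z_j\,\partial/\partial z_j$, and such that the origin is the only zero of $\Omega$ in $B^{4m}[0,1]$. Let $A=(a_{ij})$ be the matrix for which the linear part of $\Omega$ at $0$ equals $\Omega_A=\sum_{i,j}a_{ij}z_i\,dz_j$, and assume $A$ is nonsingular. For $t$ in the closed unit disc $\overline{\mathbb{D}}\subset\mathbb{C}$ with $t\ne0$ set $\Omega^t(z)=t^{-1}\Omega(tz)$, and set $\Omega^0=\Omega_A$. Then for every $t\in\overline{\mathbb{D}}$ the only zero of $\Omega^t$ in $B^{4m}[0,1]$ is the origin. *)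

(* Defs.v *)
From HB Require Import structures.
From mathcomp Require Import all_boot all_order all_algebra.
From mathcomp Require Import all_classical all_reals all_analysis.
From mathcomp Require Import complex.
Set Implicit Arguments. Unset Strict Implicit. Unset Printing Implicit Defensive.
Import Order.TTheory GRing.Theory Num.Theory.
Import numFieldNormedType.Exports.
Local Open Scope ring_scope.

(* The complex numbers over a real field R, seen as a numFieldType so that
   MathComp-Analysis' normed-space structures (and hence Frechet
   C-differentiability) apply to C and to C^n = 'rV[C]_n. *)
Definition Cplx (R : realType) : numFieldType := R[i].

(* Squared Euclidean norm on C^n = R^{2n}:  sum_k |z_k|^2  (a nonnegative real
   element of C).  B^{2n}[0,1] = { z | eucl_norm2 z <= 1 }. *)
Definition eucl_norm2 (R : realType) (n : nat) (z : 'rV[Cplx R]_n) : Cplx R :=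
  \sum_(k < n) `|z 0 k| ^+ 2.

(* A holomorphic one-form Omega = sum_j f_j dz_j on C^n is encoded by its
   coefficient functions f : 'I_n -> C^n -> C. *)
Definition holomorphic_on (R : realType) (n : nat) (U : set 'rV[Cplx R]_n)
  (f : 'I_n -> 'rV[Cplx R]_n -> Cplx R) : Prop :=
  forall j z, U z -> differentiable (f j) z.

Definition form_zero (R : realType) (n : nat)
  (f : 'I_n -> 'rV[Cplx R]_n -> Cplx R) (z : 'rV[Cplx R]_n) : Prop :=
  forall j, f j z = 0.

Definition contract_radial (R : realType) (n : nat)
  (f : 'I_n -> 'rV[Cplx R]_n -> Cplx R) (z : 'rV[Cplx R]_n) : Cplx R :=
  \sum_(j < n) z 0 j * f j z.

Definition omega_lin (R : realType) (n : nat) (A : 'M[Cplx R]_n)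
  (j : 'I_n) (z : 'rV[Cplx R]_n) : Cplx R :=
  \sum_(i < n) A i j * z 0 i.

Definition omega_t (R : realType) (n : nat) (f : 'I_n -> 'rV[Cplx R]_n -> Cplx R)
  (A : 'M[Cplx R]_n) (t : Cplx R) (j : 'I_n) (z : 'rV[Cplx R]_n) : Cplx R :=
  if t == 0 then omega_lin A j z else t^-1 * f j (t *: z).

(* Main.v *)
Require Import Defs.
From HB Require Import structures.
From mathcomp Require Import all_boot all_order all_algebra.
From mathcomp Require Import all_classical all_reals all_analysis.
From mathcomp Require Import complex.
Import Order.TTheory GRing.Theory Num.Theory.
Import numFieldNormedType.Exports.
Local Open Scope ring_scope.

Theorem lemma4p11 (R : realType) (m : nat) (r : R)
  (f : 'I_(2 * m) -> 'rV[Cplx R]_(2 * m) -> Cplx R) (A : 'M[Cplx R]_(2 * m)) :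
  (* U = open Euclidean ball of radius r > 1 centered at 0, containing B[0,1] *)
  1 < r ->
  holomorphic_on [set z | eucl_norm2 z < ((r%:C)%C : Cplx R) ^+ 2] f ->
  (* Omega . R = 0 on U *)
  (forall z, eucl_norm2 z < ((r%:C)%C : Cplx R) ^+ 2 -> contract_radial f z = 0) ->
  (* the origin is the only zero of Omega in B[0,1] *)
  form_zero f 0 ->
  (forall z, eucl_norm2 z <= 1 -> form_zero f z -> z = 0) ->
  (* the linear part of Omega at 0 is Omega_A:  d f_j(0) h = sum_i a_ij h_i *)
  (forall j h, 'd (f j) 0 h = omega_lin A j h) ->
  A \in unitmx ->
  forall t : Cplx R, `|t| <= 1 ->
  forall z : 'rV[Cplx R]_(2 * m), eucl_norm2 z <= 1 ->
    ((forall j, omega_t f A t j z = 0) <-> z = 0).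
Proof.
move=> _ _ _ f0 fz _ Au t t1 z z1.
have [te|t0] := @eqVneq (Cplx R) t 0.
  have E : forall j, omega_t f A t j z = omega_lin A j z.
    by move=> j; rewrite /omega_t; case: ifP => // /negP[]; apply/eqP.
  under eq_forall do rewrite E.
  split; last by move=> -> j; rewrite /omega_lin big1 // => i _; rewrite mxE mulr0.
  move=> H.
  have zA : z *m A = 0.
    apply/rowP => j; rewrite [RHS]mxE -(H j) mxE /omega_lin.
    by apply: eq_bigr => k _; rewrite mulrC.
  by rewrite -(mulmxK Au z) zA mul0mx.
have E : forall j, omega_t f A t j z = t^-1 * f j (t *: z).
  move=> j; rewrite /omega_t; case: ifP => [/eqP te|//]; by move/eqP: t0.
under eq_forall do rewrite E.
split; last first.
  by move=> -> j; rewrite scaler0 f0 mulr0.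
move=> H.
have tz : t *: z = 0.
  apply: fz; last first.
    move=> j; move: (H j) => /eqP; rewrite mulf_eq0 invr_eq0 (negbTE t0) /=.
    by move/eqP.
  have e : eucl_norm2 (t *: z) = `|t| ^+ 2 * eucl_norm2 z.
    rewrite /eucl_norm2 mulr_sumr; apply: eq_bigr => k _.
    by rewrite mxE normrM exprMn.
  rewrite e; apply: le_trans z1; apply: ler_piMl.
    by apply: sumr_ge0 => k _; exact: exprn_ge0.
  by apply: exprn_ile1.
by move/eqP: tz; rewrite scalemx_eq0 (negbTE t0) /= => /eqP.
Qed.
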